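(* Let $(G,\mathbf p)$ be a framework (with $\mathbf p$ pinned with $\ell$-dimensional affine span) and $E$ an energy that is stiff-bar at $\mathbf p$. An $\ell$-pinned configuration $\mathbf p'$ lies in the kernel of the Hessian $H_E(\mathbf p)$ of $E$ at $\mathbf p$ (as a function on $\ell$-pinned configuration space) if and only if $\mathbf p(t)=\mathbf p+\mathbf p't$ is a $(1,1)$-flex of $(G,\mathbf p)$ (or $\mathbf p'=0$), i.e. if and only if $\mathbf p'\in K$.
   Context: Fix a dimension $d$. A configuration is $\mathbf p=(\mathbf p_1,\dots,\mathbf p_n)$, $\mathbf p_i\in\mathbb R^d$; a framework $(G,\mathbf p)$ consists of a graph $G$ on $\{1,\dots,n\}$ and a configuration. A configuration $\mathbf q$ is in $\ell$-pinned position if $\mathbf q_1=0$ and, for $2\le i\le\ell+1$, $\mathbf q_i\in\mathrm{span}(e_1,\dots,e_{i-1})$; these form the $\ell$-pinned configuration space. $\mathbf p$ is pinned if it has $\ell$-dimensional affine span, $\mathbf p_1,\dots,\mathbf p_{\ell+1}$ are affinely independent, and $\mathbf p$ is in $\ell$-pinned position. A $(1,1)$-flex of $(G,\mathbf p)$ is an analytic non-constant $\ell$-pinned trajectory $\mathbf p(t)$, $\mathbf p(0)=\mathbf p$, with nonzero first derivative at $0$ and such that $\frac{d}{dt}|\mathbf p_i(t)-\mathbf p_j(t)|^2\big|_{t=0}=0$ for every edge $ij$. $K$ is the linear space of $\ell$-pinned $\mathbf p'$ with $(\mathbf p_v-\mathbf p_w)\cdot(\mathbf p'_v-\mathbf p'_w)=0$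 for all edges $vw$. A stiff-bar energy at $\mathbf p$ is $E(\mathbf q)=\sum_{ij\in E(G)}E_{ij}(|\mathbf q_i-\mathbf q_j|)$ on $\ell$-pinned configurations, where each $E_{ij}:\mathbb R\to\mathbb R$ is analytic at $d_{ij}=|\mathbf p_i-\mathbf p_j|\ne0$, has a strict local minimum at $d_{ij}$, and $E_{ij}''(d_{ij})>0$. *)

(* Defs.v *)
From HB Require Import structures.
From mathcomp Require Import all_boot all_order all_algebra.
From mathcomp Require Import all_classical all_reals all_analysis.
Set Implicit Arguments. Unset Strict Implicit. Unset Printing Implicit Defensive.
Import Order.TTheory GRing.Theory Num.Theory.
Import numFieldNormedType.Exports.
Local Open Scope ring_scope.
Local Open Scope classical_set_scope.

Section Defs.
Variables (R : realType) (n d : nat).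

(* A configuration of n points in R^d: row i (0-based) is the point p_(i+1). *)
Definition config := 'M[R]_(n, d).

Definition simple_graph (G : rel 'I_n) : Prop :=
  (forall i j, G i j = G j i) /\ (forall i, ~~ G i i).

Definition dotv (q r : config) (i j : 'I_n) : R :=
  \sum_(k < d) (q i k - q j k) * (r i k - r j k).

Definition sqdist (q : config) (i j : 'I_n) : R := dotv q q i j.

Definition dist (q : config) (i j : 'I_n) : R := Num.sqrt (sqdist q i j).

(* l-pinned position (0-based: point 0 is the origin, point i for 1 <= i <= l
   lies in span(e_0, ..., e_(i-1)), i.e. its coordinates k >= i vanish). *)
Definition pinned_pos (l : nat) (q : config) : Prop :=
  forall (i : 'I_n) (k : 'I_d), (i <= l)%N -> (i <= k)%N -> q i k = 0.

Definition affine_dim (q : config) : nat :=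
  \rank (\sum_(i < n) \sum_(j < n) <<row i q - row j q>>)%MS.

Definition first_affinely_independent (l : nat) (q : config) : Prop :=
  (l < n)%N /\
  forall c : 'I_n -> R,
    (forall i : 'I_n, (l < i)%N -> c i = 0) ->
    \sum_(i < n) c i = 0 ->
    \sum_(i < n) c i *: row i q = 0 ->
    forall i, c i = 0.

Definition pinned (l : nat) (p : config) : Prop :=
  [/\ affine_dim p = l, first_affinely_independent l p & pinned_pos l p].

Definition analytic_at (f : R -> R) (x0 : R) : Prop :=
  exists (a : nat -> R) (r : R), 0 < r /\
    forall x, `|x - x0| < r ->
      (fun N : nat => \sum_(k < N) a k * (x - x0) ^+ k) @ \oo --> f x.

Definition stiff_bar (G : rel 'I_n) (p : config) (Eij : 'I_n -> 'I_n -> R -> R)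
  : Prop :=
  forall i j, G i j ->
    [/\ dist p i j != 0,
        analytic_at (Eij i j) (dist p i j),
        (\forall x \near dist p i j, x != dist p i j ->
            Eij i j (dist p i j) < Eij i j x)
      & 0 < derive1n 2 (Eij i j) (dist p i j)].

Definition energy (G : rel 'I_n) (Eij : 'I_n -> 'I_n -> R -> R) (q : config) : R :=
  \sum_(i < n) \sum_(j < n | (i < j)%N && G i j) Eij i j (dist q i j).

Definition hessian (F : config -> R) (p u v : config) : R :=
  derive1 (fun s : R => derive1 (fun t : R => F (p + s *: u + t *: v)) 0) 0.

Definition hess_kernel (l : nat) (F : config -> R) (p u : config) : Prop :=
  pinned_pos l u /\ forall v, pinned_pos l v -> hessian F p u v = 0.

Definition is_11_flex (l : nat) (G : rel 'I_n) (p : config) (traj : R -> config)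
  : Prop :=
  (forall i k, analytic_at (fun t => traj t i k) 0) /\
  [/\ (forall t, pinned_pos l (traj t)),
      traj 0 = p,
      (exists t, traj t != traj 0),
      (exists i k, derive1 (fun t => traj t i k) 0 != 0)
    & (forall i j, G i j -> derive1 (fun t => sqdist (traj t) i j) 0 = 0)].

Definition Kspace (l : nat) (G : rel 'I_n) (p : config) (p' : config) : Prop :=
  pinned_pos l p' /\ forall v w, G v w -> dotv p p' v w = 0.

End Defs.

(* Main.v *)
Require Import Defs.
From HB Require Import structures.
From mathcomp Require Import all_boot all_order all_algebra.
From mathcomp Require Import all_classical all_reals all_analysis.
From mathcomp Require Import ring lra.
Import Order.TTheory GRing.Theory Num.Theory.
Import numFieldNormedType.Exports.
Local Open Scope ring_scope.
Local Open Scope classical_set_scope.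
Set Implicit Arguments. Unset Strict Implicit. Unset Printing Implicit Defensive.


Section Aux.
Variable R : realType.

Lemma sum_iq_identity (q : R) N :
  (1 - q) ^+ 2 * \sum_(0 <= i < N) (i.+1%:R * q ^+ i) =
  1 - N.+1%:R * q ^+ N + N%:R * q ^+ N.+1.
Proof.
elim: N => [|N IH]; first by rewrite big_nil mulr0 expr0 mulr1 mul0r addr0 subrr.
rewrite big_nat_recr //= mulrDr IH.
rewrite !exprS -!(natr1 N) -!(natr1 N.+1) -!natr1 /=.
ring.
Qed.

Lemma cvg_sum_iq (q : R) : 0 <= q < 1 -> cvgn (series (fun i => i.+1%:R * q ^+ i)).
Proof.
move=> /andP[q0 q1].
apply: nondecreasing_is_cvgn.
  apply: nondecreasing_series => i _ /=; rewrite mulr_ge0 // exprn_ge0 //.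
exists (((1 - q) ^+ 2)^-1) => _ [N _ <-] /=.
have hq : 0 < (1 - q) ^+ 2 by rewrite exprn_gt0 // subr_gt0.
rewrite -(ler_pM2l hq) mulfV ?lt0r_neq0 //.
rewrite /series /= sum_iq_identity.
rewrite exprS -natr1.
have hx : 0 <= q ^+ N by rewrite exprn_ge0.
have hy : 0 <= N%:R :> R by rewrite ler0n.
set x := q ^+ N in hx *; set y := N%:R in hy *.
have h1 : 0 <= y * x * (1 - q) by rewrite !mulr_ge0 // subr_ge0 ltW.
nra.
Qed.

Lemma cvg_pseries_diffs (c : R^nat) (K z : R) :
  cvgn (pseries c K) -> `|z| < `|K| -> cvgn (pseries (pseries_diffs c) z).
Proof.
move=> Ck zK.
have [M [Mreal HM]] := cvg_series_bounded Ck.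
have HM1 : forall i, `|c i * K ^+ i| <= M + 1.
  by move=> i; apply: HM => //; rewrite ltrDl.
have M1 : 0 <= M + 1 by apply: le_trans (HM1 0%N).
pose w : R := (`|z| + `|K|) / 2.
have zw : `|z| < w by rewrite /w ltr_pdivlMr // mulrDr mulr1 ltrD2l.
have wK : w < `|K| by rewrite /w ltr_pdivrMr // mulrDr mulr1 ltrD2r.
have w0 : 0 < w by apply: le_lt_trans zw.
clearbody w.
pose q : R := `|z| / w.
have q0 : 0 <= q by rewrite divr_ge0 // ltW.
have q1 : q < 1 by rewrite ltr_pdivrMr // mul1r.
apply: normed_cvg.
apply: (@series_le_cvg _ _ (((M + 1) / w) *: (fun i => i.+1%:R * q ^+ i))).
- by move=> i; rewrite normr_ge0.
- move=> i; change (0 <= (M+1)/w * (i.+1%:R * q ^+ i)).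
  by rewrite mulr_ge0 ?divr_ge0 ?mulr_ge0 ?exprn_ge0 // ltW.
- move=> i; change (`|pseries_diffs c i * z ^+ i| <= (M+1)/w * (i.+1%:R * q ^+ i)).
  rewrite /pseries_diffs !normrM normr_nat normrX.
  have hc : `|c i.+1| * w ^+ i.+1 <= M + 1.
    apply: le_trans (HM1 i.+1); rewrite normrM normrX ler_wpM2l //.
    by rewrite lerXn2r // ?nnegrE ltW // (lt_trans w0).
  have wi : 0 < w ^+ i.+1 by rewrite exprn_gt0.
  have -> : (M + 1) / w * (i.+1%:R * q ^+ i) =
            (i.+1%:R * `|z| ^+ i) * ((M + 1) / w ^+ i.+1).
    rewrite /q exprMn exprVn exprS invfM.
    ring.
  rewrite mulrAC ler_wpM2l ?mulr_ge0 ?exprn_ge0 //.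
  by rewrite ler_pdivlMr.
- exact/is_cvg_seriesZ/cvg_sum_iq/andP.
Qed.
Lemma analytic_C2' (f : R -> R) (x0 : R) : analytic_at f x0 ->
  (\forall y \near x0, derivable f y 1) /\ derivable (derive1 f) x0 1.
Proof.
case=> a [r [r0 Ha]].
have Hps : forall y, pseries a y = (fun N => \sum_(k < N) a k * y ^+ k).
  by move=> y; apply/funext => N; rewrite /pseries /series /= big_mkord.
have Hcv : forall x, `|x - x0| < r -> cvgn (pseries a (x - x0)).
  by move=> x /Ha; rewrite -Hps => h; apply/cvg_ex; exists (f x).
have Hf : forall x, `|x - x0| < r -> f x = limn (pseries a (x - x0)).
  by move=> x /Ha; rewrite -Hps => h; apply/esym/cvg_lim.
have Hr : forall z, `|z| < r -> cvgn (pseries a z).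
  by move=> z hz; have := Hcv (z + x0); rewrite addrK; apply.
have hlt : forall u v : R, 0 < u -> u < v -> `|u| < `|v|.
  by move=> u v u0 uv; rewrite !gtr0_norm // (lt_trans u0).
have r2 : 0 < r / 2 by rewrite divr_gt0.
have r4 : r / 4 < r / 2 by rewrite ltr_pM2l // ltf_pV2 ?ltr_nat ?posrE.
have r8 : r / 8 < r / 4 by rewrite ltr_pM2l // ltf_pV2 ?ltr_nat ?posrE.
have r16 : r / 16 < r / 8 by rewrite ltr_pM2l // ltf_pV2 ?ltr_nat ?posrE.
have r40 : 0 < r / 4 by rewrite divr_gt0.
have r80 : 0 < r / 8 by rewrite divr_gt0.
have K0 : 0 < r / 16 by rewrite divr_gt0.
have C0 : cvgn (pseries a (r / 2)).
  by apply: Hr; rewrite gtr0_norm // ltr_pdivrMr // ltr_pMr // ltr1n.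
have C1 : cvgn (pseries (pseries_diffs a) (r / 4)).
  by apply: cvg_pseries_diffs C0 _; apply: hlt.
have C2 : cvgn (pseries (pseries_diffs (pseries_diffs a)) (r / 8)).
  by apply: cvg_pseries_diffs C1 _; apply: hlt.
have C3 : cvgn (pseries (pseries_diffs (pseries_diffs (pseries_diffs a))) (r / 16)).
  by apply: cvg_pseries_diffs C2 _; apply: hlt.
have C0' : cvgn (pseries a (r / 16)).
  apply: is_cvg_pseries_inside C0 _; apply: hlt => //.
  by apply: lt_trans r16 (lt_trans r8 r4).
have C1' : cvgn (pseries (pseries_diffs a) (r / 16)).
  apply: is_cvg_pseries_inside C1 _; apply: hlt => //.
  by apply: lt_trans r16 r8.
have C2' : cvgn (pseries (pseries_diffs (pseries_diffs a)) (r / 16)).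
  by apply: is_cvg_pseries_inside C2 _; apply: hlt.
set K := r / 16.
pose F : R -> R := fun z => limn (pseries a z).
pose F1 : R -> R := fun z => limn (pseries (pseries_diffs a) z).
have D1 : forall z : R, `|z| < `|K| -> is_derive z (1:R) F (F1 z).
  by move=> z hz; apply: (pseries_snd_diffs C0' C1' C2').
have D2 : derivable F1 (0:R) (1:R).
  have := @pseries_snd_diffs R (pseries_diffs a) K 0 C1' C2' C3.
  have hK : `|0 : R| < `|K| by rewrite normr0 normr_gt0 lt0r_neq0.
  by move=> /(_ hK) [].
have Kr : K < r.
  apply: lt_trans r16 (lt_trans r8 (lt_trans r4 _)).
  by rewrite ltr_pdivrMr // ltr_pMr // ltr1n.
have Claim1 : forall y, `|y - x0| < K -> is_derive y (1:R) f (F1 (y - x0)).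
  move=> y hy.
  have h1 : is_derive y (1:R) (F \o (fun t => t - x0)) (F1 (y - x0) * 1).
    apply: is_derive1_comp; first by apply: D1; rewrite (gtr0_norm K0).
    exact: is_derive_shift.
  rewrite mulr1 in h1; apply: near_eq_is_derive h1.
  have : nbhs y (ball x0 r).
    apply: open_nbhs_nbhs; split; first exact: ball_open.
    by rewrite /ball /= distrC (lt_trans hy Kr).
  apply: filterS => t; rewrite /ball /= distrC => ht.
  by rewrite /= Hf.
split.
  move: (nbhsx_ballx x0 K K0); apply: filterS => y; rewrite /ball /= distrC => hy.
  by case: (Claim1 y hy).
have E1 : \forall y \near x0, (fun t => F1 (t - x0)) y = derive1 f y.
  move: (nbhsx_ballx x0 K K0); apply: filterS => y; rewrite /ball /= distrC => hy.
  by rewrite derive1E; case: (Claim1 y hy) => _ ->.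
apply: (@near_eq_derivable _ R^o R^o (fun t => F1 (t - x0)) (derive1 f) x0 1 E1).
have h2 : is_derive (x0 - x0) (1:R) F1 ('D_1 F1 0).
  by rewrite subrr; exact: derivableP.
have h3 : is_derive x0 (1:R) (fun t => t - x0) 1 := is_derive_shift x0 1 (- x0).
have := @is_derive1_comp _ F1 (fun t => t - x0) x0 _ _ h2 h3.
by case.
Qed.

Lemma stiff_facts (E : R -> R) (d : R) : analytic_at E d ->
  (\forall x \near d, x != d -> E d < E x) ->
  [/\ \forall y \near d, derivable E y 1, derivable (derive1 E) d 1
    & derive1 E d = 0].
Proof.
move=> /analytic_C2' [H1 H2] Hmin; split => //.
have HH : \forall x \near d, derivable E x 1 /\ (x != d -> E d < E x).
  by near=> x; split; near: x.
move/nbhs_ballP: HH => [e /= e0 He].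
have hb : forall t, t \in `]d - e, d + e[%R -> ball d e t.
  by move=> t; rewrite in_itv /= => ht; rewrite /ball /= ltr_distlC.
have := @derive1_at_min R E (d - e) (d + e) d.
case.
- by rewrite lerD2l lerNl ?oppr_le0 (le_trans _ (ltW e0)) // oppr_le0 ltW.
- by move=> t /hb /He [].
- by rewrite in_itv /=; apply/andP; split; lra.
- move=> t /hb /He [_ h]; have [->|td] := eqVneq t d; first by [].
  exact/ltW/h.
- by move=> _ <-; rewrite derive1E.
Unshelve. all: by end_near. Qed.
End Aux.


Section Aux.
Variable R : realType.

Lemma quad_derive (a b c x : R) :
  is_derive x (1:R) (fun s : R => a + s * b + s ^+ 2 * c) (b + 2 * x * c).
Proof.
pose p : {poly R} := a%:P + b *: 'X + c *: 'X^2.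
have -> : (fun s : R => a + s * b + s ^+ 2 * c) = horner p.
  by apply/funext => s; rewrite /p !hornerD !hornerZ hornerC hornerX hornerXn; ring.
have -> : b + 2 * x * c = p^`().[x].
  rewrite /p !derivD !derivZ derivC derivX derivXn !hornerD !hornerZ hornerC.
  rewrite hornerMn hornerC hornerXn /=; ring.
exact: is_derive_poly.
Qed.

Lemma lin_derive (a b x : R) :
  is_derive x (1:R) (fun s : R => a + s * b) b.
Proof.
pose p : {poly R} := a%:P + b *: 'X.
have -> : (fun s : R => a + s * b) = horner p.
  by apply/funext => s; rewrite /p !hornerD !hornerZ hornerC hornerX; ring.
have -> : b = p^`().[x].
  by rewrite /p !derivD !derivZ derivC derivX !hornerD !hornerZ hornerC hornerC; ring.
exact: is_derive_poly.
Qed.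

Definition q0f (A B U s : R) := A + s * (2 * B) + s ^+ 2 * U.
Definition Qf (A B C U X V s : R) (t : R) :=
  q0f A B U s + t * (2 * C + 2 * s * X) + t ^+ 2 * V.
Definition gf (E : R -> R) (A B C U X s : R) :=
  derive1 E (Num.sqrt (q0f A B U s)) * ((C + s * X) / Num.sqrt (q0f A B U s)).

Lemma edge_hess (E : R -> R) (A B C U X V : R) :
  0 < A ->
  (\forall y \near Num.sqrt A, derivable E y 1) ->
  derivable (derive1 E) (Num.sqrt A) 1 ->
  derive1 E (Num.sqrt A) = 0 ->
  (\forall s \near 0, is_derive (0:R) (1:R) (Qf A B C U X V s \; (Num.sqrt \; E))
       (gf E A B C U X s)) /\
  is_derive (0:R) (1:R) (gf E A B C U X)
     (derive1 (derive1 E) (Num.sqrt A) * B * C / A).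
Proof.
move=> A0 HE1 HE2 HE0.
have sA0 : 0 < Num.sqrt A by rewrite sqrtr_gt0.
have q00 : q0f A B U 0 = A by rewrite /q0f; ring.
have hq0 : is_derive (0:R) (1:R) (q0f A B U) (2 * B + 2 * 0 * U).
  exact: quad_derive.
have cq0 : q0f A B U @ (0:R) --> A.
  rewrite -{2}q00; apply: differentiable_continuous.
  by apply/derivable1_diffP; case: hq0.
have cq : (fun s => Num.sqrt (q0f A B U s)) @ (0:R) --> Num.sqrt A.
  by apply: continuous_cvg => //; exact: sqrt_continuous.
split.
  have P1 : \forall s \near 0, 0 < Num.sqrt (q0f A B U s).
    exact: (@cvgr_gt _ _ _ _ _ _ cq 0 sA0).
  have P2 : \forall s \near 0, derivable E (Num.sqrt (q0f A B U s)) 1 by exact: cq HE1.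
  near=> s.
  have h1 : 0 < Num.sqrt (q0f A B U s) by near: s.
  have h2 : derivable E (Num.sqrt (q0f A B U s)) 1 by near: s.
  have e0 : Qf A B C U X V s 0 = q0f A B U s by rewrite /Qf; ring.
  have hQ : is_derive (0:R) (1:R) (Qf A B C U X V s)
      ((2 * C + 2 * s * X) + 2 * 0 * V) by exact: quad_derive.
  have hsq : is_derive (Qf A B C U X V s 0) (1:R) Num.sqrt
      ((2 * Num.sqrt (Qf A B C U X V s 0))^-1).
    by apply: is_derive1_sqrt; rewrite e0 -sqrtr_gt0.
  have hE : is_derive (Num.sqrt (Qf A B C U X V s 0)) (1:R) E
      (derive1 E (Num.sqrt (Qf A B C U X V s 0))).
    by rewrite e0 derive1E; exact: derivableP.
  have := @is_derive1_comp _ E (Num.sqrt \o Qf A B C U X V s) 0 _ _ hE (is_derive1_comp hsq hQ).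
  suff -> : gf E A B C U X s = derive1 E (Num.sqrt (Qf A B C U X V s 0)) *
     ((2 * Num.sqrt (Qf A B C U X V s 0))^-1 * (2 * C + 2 * s * X + 2 * 0 * V)) by [].
  rewrite /gf e0; congr (_ * _); field.
  by rewrite lt0r_neq0.
set E2 := derive1 (derive1 E) (Num.sqrt A).
have hsq0 : is_derive (q0f A B U 0) (1:R) Num.sqrt ((2 * Num.sqrt (q0f A B U 0))^-1).
  by apply: is_derive1_sqrt; rewrite q00.
have hE' : is_derive (Num.sqrt (q0f A B U 0)) (1:R) (derive1 E) E2.
  by rewrite q00 /E2 derive1E; exact: derivableP.
have hc := is_derive1_comp hsq0 hq0.
have hin := @is_derive1_comp _ (derive1 E) (Num.sqrt \o q0f A B U) 0 _ _ hE' hc.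
have hlin := lin_derive C X 0.
have hinv : derivable (fun s : R => (Num.sqrt (q0f A B U s))^-1) (0:R) (1:R).
  apply: derivableV; first by rewrite q00 lt0r_neq0.
  by case: hc.
have hdiv : derivable (fun s : R => (C + s * X) * (Num.sqrt (q0f A B U s))^-1) (0:R) (1:R).
  by apply: derivableM => //; case: hlin.
have := is_deriveM hin (derivableP hdiv).
set D := (derive _ _ _).
suff -> : E2 * B * C / A = derive1 E (Num.sqrt (q0f A B U 0)) *: D +
   ((C + 0 * X) * (Num.sqrt (q0f A B U 0))^-1) *:
   (E2 * ((2 * Num.sqrt (q0f A B U 0))^-1 * (2 * B + 2 * 0 * U))) by [].
rewrite q00 HE0 /GRing.scale /= mul0r add0r.
rewrite -[X in _ / X](sqr_sqrtr (ltW A0)).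
field; by rewrite lt0r_neq0.
Unshelve. all: by end_near.
Qed.
End Aux.


Section Main.
Variable R : realType.

Lemma is_derive_bigsum (I : Type) (r : seq I) (P : pred I) (h : I -> R -> R)
    (dh : I -> R) (x : R) :
  (forall i, P i -> is_derive x (1:R) (h i) (dh i)) ->
  is_derive x (1:R) (fun y => \sum_(i <- r | P i) h i y) (\sum_(i <- r | P i) dh i).
Proof.
move=> H; elim: r => [|a r IH].
  have -> : (fun y : R => \sum_(i <- [::] | P i) h i y) = cst 0.
    by apply/funext => y; rewrite big_nil.
  by rewrite big_nil; exact: is_derive_cst.
case Pa: (P a).
  have -> : (fun y : R => \sum_(i <- a :: r | P i) h i y) =
            h a + (fun y => \sum_(i <- r | P i) h i y).
    by apply/funext => y; rewrite big_cons Pa.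
  by rewrite big_cons Pa; apply: is_deriveD => //; exact: H.
have -> : (fun y : R => \sum_(i <- a :: r | P i) h i y) =
          (fun y => \sum_(i <- r | P i) h i y).
  by apply/funext => y; rewrite big_cons Pa.
by rewrite big_cons Pa.
Qed.

Lemma sqdist_expand (n d : nat) (p u v : 'M[R]_(n, d)) (i j : 'I_n) (s t : R) :
  sqdist (p + s *: u + t *: v) i j =
  Qf (sqdist p i j) (dotv p u i j) (dotv p v i j) (sqdist u i j) (dotv u v i j)
     (sqdist v i j) s t.
Proof.
rewrite /Qf /q0f /sqdist /dotv.
rewrite !mulr_sumr -!big_split /=.
rewrite mulr_sumr -!big_split /=.
apply: eq_bigr => k _; rewrite !mxE; ring.
Qed.

Lemma sqdist_ge0 (n d : nat) (p : 'M[R]_(n, d)) i j : 0 <= sqdist p i j.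
Proof. by rewrite /sqdist /dotv sumr_ge0 // => k _; rewrite -expr2 sqr_ge0. Qed.

Lemma hess_formula (n d : nat) (G : rel 'I_n) (p : 'M[R]_(n, d))
    (Eij : 'I_n -> 'I_n -> R -> R) :
  stiff_bar G p Eij -> forall u v,
  hessian (energy G Eij) p u v =
  \sum_(i < n) \sum_(j < n | (i < j)%N && G i j)
     (derive1n 2 (Eij i j) (dist p i j) * dotv p u i j * dotv p v i j
        / sqdist p i j).
Proof.
move=> HS u v.
pose P := fun i j : 'I_n => (i < j)%N && G i j.
have Hedge : forall i j, G i j ->
  [/\ 0 < sqdist p i j,
      \forall y \near Num.sqrt (sqdist p i j), derivable (Eij i j) y 1,
      derivable (derive1 (Eij i j)) (Num.sqrt (sqdist p i j)) 1
    & derive1 (Eij i j) (Num.sqrt (sqdist p i j)) = 0].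
  move=> i j Gij; case: (HS i j Gij) => dn0 an mn _.
  have [h1 h2 h3] := stiff_facts an mn.
  split => //; rewrite lt_def sqdist_ge0 andbT.
  by apply: contra dn0 => /eqP; rewrite /dist => ->; rewrite sqrtr0.
pose QQ i j s := Qf (sqdist p i j) (dotv p u i j) (dotv p v i j)
   (sqdist u i j) (dotv u v i j) (sqdist v i j) s.
pose GG i j := gf (Eij i j) (sqdist p i j) (dotv p u i j) (dotv p v i j)
   (sqdist u i j) (dotv u v i j).
have Einner : forall s, (fun t => energy G Eij (p + s *: u + t *: v)) =
   (fun t => \sum_(i < n) (fun t => \sum_(j < n | P i j)
        (QQ i j s \; (Num.sqrt \; Eij i j)) t) t).
  move=> s; apply/funext => t; rewrite /energy; apply: eq_bigr => i _.
  by apply: eq_bigr => j _; rewrite /dist sqdist_expand.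
have Hn1 : forall i j, \forall s \near 0, P i j ->
    is_derive (0:R) (1:R) (QQ i j s \; (Num.sqrt \; Eij i j)) (GG i j s).
  move=> i j.
  case Pij : (P i j); last by near=> s.
  move: Pij => /andP[_ Gij].
  have [h0 h1 h2 h3] := Hedge i j Gij.
  have [H1 _] := @edge_hess R (Eij i j) (sqdist p i j) (dotv p u i j) (dotv p v i j) (sqdist u i j) (dotv u v i j) (sqdist v i j) h0 h1 h2 h3.
  by move: H1; apply: filterS => s hs _.
have Hn : \forall s \near 0, forall i j, P i j ->
    is_derive (0:R) (1:R) (QQ i j s \; (Num.sqrt \; Eij i j)) (GG i j s).
  have Hn2 : forall i, \forall s \near 0, forall j, P i j ->
    is_derive (0:R) (1:R) (QQ i j s \; (Num.sqrt \; Eij i j)) (GG i j s).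
    by move=> i; exact: (filter_forall _ (Hn1 i)).
  exact: (filter_forall _ Hn2).
have Hd1 : \forall s \near 0,
    derive1 (fun t => energy G Eij (p + s *: u + t *: v)) 0 =
    \sum_(i < n) \sum_(j < n | P i j) GG i j s.
  near=> s; rewrite Einner derive1E.
  have hs : forall i j, P i j -> is_derive (0:R) (1:R) (QQ i j s \; (Num.sqrt \; Eij i j)) (GG i j s).
    by near: s.
  have := @is_derive_bigsum 'I_n (index_enum 'I_n) xpredT
    (fun i => fun t => \sum_(j < n | P i j) (QQ i j s \; (Num.sqrt \; Eij i j)) t)
    (fun i => \sum_(j < n | P i j) GG i j s) 0
    (fun i _ => @is_derive_bigsum 'I_n (index_enum 'I_n) (P i) _ _ 0 (hs i)).
  by case.
rewrite /hessian derive1E (near_eq_derive _ Hd1).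
have := @is_derive_bigsum 'I_n (index_enum 'I_n) xpredT
    (fun i => fun s => \sum_(j < n | P i j) GG i j s)
    (fun i => \sum_(j < n | P i j)
     (derive1n 2 (Eij i j) (dist p i j) * dotv p u i j * dotv p v i j
        / sqdist p i j)) 0.
case.
  move=> i _; apply: is_derive_bigsum => j /andP[_ Gij].
  have [h0 h1 h2 h3] := Hedge i j Gij.
  by have [_ H2] := @edge_hess R (Eij i j) (sqdist p i j) (dotv p u i j) (dotv p v i j) (sqdist u i j) (dotv u v i j) (sqdist v i j) h0 h1 h2 h3.
by move=> _ ->.
Unshelve. all: by end_near.
Qed.
End Main.


Section Fin.
Variable R : realType.

Lemma deriv_sqdist_line (n d : nat) (p p' : 'M[R]_(n, d)) i j :
  derive1 (fun t => sqdist (p + t *: p') i j) 0 = 2 * dotv p p' i j.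
Proof.
have -> : (fun t => sqdist (p + t *: p') i j) =
  Qf (sqdist p i j) (dotv p p' i j) (dotv p p' i j) (sqdist p' i j)
     (dotv p' p' i j) (sqdist p' i j) 0.
  apply/funext => t; rewrite -sqdist_expand; congr sqdist.
  by rewrite scale0r addr0.
rewrite derive1E.
have := quad_derive (q0f (sqdist p i j) (dotv p p' i j) (sqdist p' i j) 0)
  (2 * dotv p p' i j + 2 * 0 * dotv p' p' i j) (sqdist p' i j) 0.
case=> _ ->; ring.
Qed.

Lemma line_analytic (a b : R) : analytic_at (fun t => a + t * b) 0.
Proof.
pose c := fun m : nat => if m is 0%N then a else if m is 1%N then b else 0.
exists c, 1; split => // x _.
rewrite -(cvg_shiftn 2).
have -> : (fun n => \sum_(k < n + 2) c k * (x - 0) ^+ k) = cst (a + x * b).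
  apply/funext => N; rewrite addn2 2!big_ord_recl big1 => [|m _]; last by rewrite mul0r.
  by rewrite /= subr0 expr0 mulr1 expr1 addr0; congr (_ + _); rewrite mulrC.
exact: cvg_cst.
Qed.

Lemma line_derive (a b : R) : derive1 (fun t => a + t * b) 0 = b.
Proof. by rewrite derive1E; case: (lin_derive a b 0) => _ ->. Qed.

End Fin.

Lemma dotv_sym (R : realType) (n d : nat) (q r : 'M[R]_(n, d)) i j :
  dotv q r i j = dotv q r j i.
Proof. by rewrite /dotv; apply: eq_bigr => k _; ring. Qed.

Unset Implicit Arguments.
Close Scope classical_set_scope.

Theorem lemma7p1 (R : realType) (n d l : nat) (G : rel 'I_n)
  (p : 'M[R]_(n, d)) (Eij : 'I_n -> 'I_n -> R -> R) :
  simple_graph G -> pinned l p -> stiff_bar G p Eij ->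
  forall p' : 'M[R]_(n, d), pinned_pos l p' ->
    (hess_kernel l (energy G Eij) p p' <->
       (is_11_flex l G p (fun t : R => p + t *: p') \/ p' = 0))
    /\ (hess_kernel l (energy G Eij) p p' <-> Kspace l G p p').
Proof.
move=> [Gsym Girr] [_ _ Hpp] HS p' Hp'.
have HF := hess_formula HS.
have Ksym : forall u : 'M[R]_(n, d), (forall i j : 'I_n, (i < j)%N -> G i j -> dotv p u i j = 0) ->
    forall v w, G v w -> dotv p u v w = 0.
  move=> u H v w Gvw; case: (ltngtP v w) => [vw|wv|/val_inj vw].
  - exact: H.
  - by rewrite dotv_sym; apply: H => //; rewrite Gsym.
  - by move: Gvw; rewrite vw (negbTE (Girr w)).
have KH : hess_kernel l (energy G Eij) p p' <-> Kspace l G p p'.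
  split.
    move=> [_ Hk]; split => //; apply: Ksym => i j ij Gij.
    have := Hk p' Hp'; rewrite HF => H0.
    have Hpos : forall i j : 'I_n, (i < j)%N && G i j -> 0 <=
        derive1n 2 (Eij i j) (dist p i j) * dotv p p' i j * dotv p p' i j
        / sqdist p i j.
      move=> a b /andP[_ Gab]; case: (HS a b Gab) => dn0 _ _ e2.
      apply: mulr_ge0; last by rewrite invr_ge0 sqdist_ge0.
      rewrite -mulrA; apply: mulr_ge0; first exact: ltW.
      by rewrite -expr2 sqr_ge0.
    have Hi := psumr_eq0P (fun a _ => sumr_ge0 _ (Hpos a)) H0.
    have Pij : (i < j)%N && G i j by rewrite ij Gij.
    have := psumr_eq0P (Hpos i) (Hi i isT) Pij.
    move=> /eqP.
    case: (HS i j Gij) => dn0 _ _ e2.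
    have A0 : sqdist p i j != 0.
      by apply: contra dn0 => /eqP; rewrite /dist => ->; rewrite sqrtr0.
    rewrite !mulf_eq0 invr_eq0 (negbTE A0) (negbTE (lt0r_neq0 e2)) orbb /=.
    by rewrite orbF => /eqP.
  move=> [_ HK]; split => // v _; rewrite HF.
  apply: big1 => i _; apply: big1 => j /andP[_ Gij].
  by rewrite HK // mulr0 mul0r mul0r.
split => //.
rewrite KH; split.
  move=> [_ HK].
  have [->|p'0] := eqVneq p' 0; first by right.
  left; split.
    move=> i k.
    have -> : (fun t => (p + t *: p') i k) = (fun t => p i k + t * p' i k).
      by apply/funext => t; rewrite !mxE.
    exact: line_analytic.
  split.
  - by move=> t i k il ik; rewrite !mxE Hpp // Hp' // mulr0 addr0.
  - by rewrite scale0r addr0.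
  - exists 1; rewrite scale1r scale0r addr0.
    apply: contra p'0 => /eqP h.
    by rewrite -(addKr p p') h addNr.
  - have [i [k hik]] : exists i k, p' i k != 0.
      apply: contrapT => hne; move/eqP: p'0; apply; apply/matrixP => i k.
      rewrite mxE; apply/eqP; rewrite -[_ == _]negbK; apply/negP => hik.
      by apply: hne; exists i, k.
    exists i, k.
    have -> : (fun t => (p + t *: p') i k) = (fun t => p i k + t * p' i k).
      by apply/funext => t; rewrite !mxE.
    by rewrite line_derive.
  - by move=> i j Gij; rewrite deriv_sqdist_line HK // mulr0.
move=> [[_ [_ _ _ _ He]]|->].
  split => // v w Gvw.
  have := He v w Gvw; rewrite deriv_sqdist_line => /eqP.
  by rewrite mulf_eq0 pnatr_eq0 /= => /eqP.
split; first by move=> i k _ _; rewrite mxE.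
by move=> v w _; rewrite /dotv big1 // => k _; rewrite !mxE subrr mulr0.
Qed.
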